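(* Assume the setting in the context with Assumptions (A1), (A2), (A3). Let $0<\tau_2<1/\zeta$ (any $\tau_2>0$ if $\zeta=0$). For $y_t\in Y$ and $z_t\in\mathcal X$, let $y^+(z_t)=\mathrm{prox}_{\tau_2h}\big(y_t+\tau_2\nabla_y\tilde f(x^*(y_t,z_t),y_t)\big)$. Then $\|x^*(y^+(z_t),z_t)-x^*(z_t)\|^2\le\frac{3}{\mu(p-l)\tau_2^2}\big(1+\tau_2^2l^2+\gamma_2^2\tau_2^2l^2\big)\|y^+(z_t)-y_t\|^2$, where $\gamma_2=\frac{p+l}{p-l}$.
   Context: $\mathcal X=\mathbb R^{d_1\times r}$ (Frobenius norm), $\mathcal Y=\mathbb R^{d_2}$, $\mathcal M=\{x:x^\top x=I_r\}$, $c(x)=x^\top x-I_r$, $A(x)=x(\frac32I_r-\frac12x^\top x)$; $C>\frac12+\sup_{x\in\mathcal M}\|x\|$, $X=\{x:\|x\|\le C\}$, $\bar X=\{A(x):\|x\|\le C\}$. $\partial$ is the Fréchet subdifferential; $\mathrm{prox}_{\tau h}(v)=\arg\min_y\{\tau h(y)+\frac12\|y-v\|^2\}$. (A1) $h:\mathcal Y\to\mathbb R\cup\{+\infty\}$ proper, closed, $\zeta$-weakly convex ($h+\frac\zeta2\|\cdot\|^2$ convex), closed domain $Y$, locally Lipschitz on $Y$, $Y$ bounded. (A2) $f$ differentiable on an open set containing $\bar X\times Y$ with $\|\nabla_xf(x_1,y_1)-\nabla_xf(x_2,y_2)\|\le L_{xx}\|x_1-x_2\|+L_{xy}\|y_1-y_2\|$,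 $\|\nabla_yf(x_1,y_1)-\nabla_yf(x_2,y_2)\|\le L_{yx}\|x_1-x_2\|+L_{yy}\|y_1-y_2\|$ on $\bar X\times Y$. (A3) With $f_r=f-h$, there is $\mu>0$ with $\max_wf_r(x,w)-f_r(x,y)\le\frac1{2\mu}\mathrm{dist}^2(0,-\nabla_yf(x,y)+\partial h(y))$ for all $x\in\bar X,y\in Y$. For $\rho>0$: $\tilde f(x,y)=f(A(x),y)+\frac\rho4\|c(x)\|^2$, $\tilde f_r=\tilde f-h$; $l$ is the (blockwise) Lipschitz constant of $\nabla\tilde f$ on $X\times Y$; standing choice $p>l$. $\hat f(x,y;z)=\tilde f(x,y)+\frac p2\|x-z\|^2$, $\hat f_r=\hat f-h$, $\Phi(x;z)=\max_{y\in\mathcal Y}\hat f_r(x,y;z)$, $x^*(y,z)=\arg\min_{x\in X}\hat f(x,y;z)$, $x^*(z)=\arg\min_{x\in X}\Phi(x;z)$. *)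

(* Defs.v *)
From HB Require Import structures.
From mathcomp Require Import all_boot all_order all_algebra.
From mathcomp Require Import classical_sets reals.
Set Implicit Arguments. Unset Strict Implicit. Unset Printing Implicit Defensive.
Import Order.TTheory GRing.Theory Num.Theory.
Local Open Scope ring_scope.
Local Open Scope classical_set_scope.

Section Defs.
Variable R : realType.

Definition mdot {m n} (A B : 'M[R]_(m, n)) : R :=
  \sum_(i < m) \sum_(j < n) A i j * B i j.
Definition fsq {m n} (A : 'M[R]_(m, n)) : R := mdot A A.
Definition fnorm {m n} (A : 'M[R]_(m, n)) : R := Num.sqrt (fsq A).

Variables d1 r d2 : nat.
Notation MX := 'M[R]_(d1, r).
Notation VY := 'rV[R]_d2.

Definition stiefel (x : MX) : Prop := x^T *m x = 1%:M.
Definition cmap (x : MX) : 'M[R]_r := x^T *m x - 1%:M.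
Definition Amap (x : MX) : MX := x *m ((3/2)%:M - (1/2) *: (x^T *m x)).

Definition Xball (C : R) : set MX := [set x | fnorm x <= C].
Definition Xbar (C : R) : set MX := [set Amap x | x in Xball C].

Definition is_grad2 (F : MX -> VY -> R) (x : MX) (y : VY) (gx : MX) (gy : VY)
  : Prop :=
  forall eps, 0 < eps -> exists2 delta, 0 < delta &
    forall hx hy, fnorm hx < delta -> fnorm hy < delta ->
      `|F (x + hx) (y + hy) - F x y - mdot gx hx - mdot gy hy|
        <= eps * (fnorm hx + fnorm hy).

Definition open2 (U : set (MX * VY)) : Prop :=
  forall x y, U (x, y) -> exists2 delta, 0 < delta &
    forall x' y', fnorm (x' - x) < delta -> fnorm (y' - y) < delta -> U (x', y').

(* h : Y -> R u {+oo} is represented by its finite part h on its domain Ydom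
   (h = +oo outside Ydom). *)
Definition closed_set (D : set VY) : Prop :=
  forall y, (forall eps, 0 < eps -> exists2 y', D y' & fnorm (y - y') < eps) -> D y.

Definition assumption_A1 (h : VY -> R) (Ydom : set VY) (zeta : R) : Prop :=
  [/\ (exists y, Ydom y) /\
      closed_set Ydom,
      (forall y, Ydom y -> forall eps, 0 < eps -> exists2 delta, 0 < delta &
          forall y', Ydom y' -> fnorm (y' - y) < delta -> h y - eps < h y'),
      0 <= zeta /\
      (forall y1 y2 t, Ydom y1 -> Ydom y2 -> 0 <= t <= 1 ->
         Ydom (t *: y1 + (1 - t) *: y2) /\
         h (t *: y1 + (1 - t) *: y2) + zeta / 2 * fsq (t *: y1 + (1 - t) *: y2)
           <= t * (h y1 + zeta / 2 * fsq y1) + (1 - t) * (h y2 + zeta / 2 * fsq y2)),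
      (forall y, Ydom y -> exists delta, exists L, 0 < delta /\
         forall y1 y2, Ydom y1 -> Ydom y2 -> fnorm (y1 - y) < delta ->
           fnorm (y2 - y) < delta -> `|h y1 - h y2| <= L * fnorm (y1 - y2)) &
      (exists B, forall y, Ydom y -> fnorm y <= B)].

Definition assumption_A2 (f : MX -> VY -> R) (fx : MX -> VY -> MX)
  (fy : MX -> VY -> VY) (U : set (MX * VY)) (Ydom : set VY) (C : R)
  (Lxx Lxy Lyx Lyy : R) : Prop :=
  [/\ open2 U,
      (forall x y, Xbar C x -> Ydom y -> U (x, y)),
      (forall x y, U (x, y) -> is_grad2 f x y (fx x y) (fy x y)),
      (forall x1 y1 x2 y2, Xbar C x1 -> Ydom y1 -> Xbar C x2 -> Ydom y2 ->
         fnorm (fx x1 y1 - fx x2 y2) <= Lxx * fnorm (x1 - x2) + Lxy * fnorm (y1 - y2)) &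
      (forall x1 y1 x2 y2, Xbar C x1 -> Ydom y1 -> Xbar C x2 -> Ydom y2 ->
         fnorm (fy x1 y1 - fy x2 y2) <= Lyx * fnorm (x1 - x2) + Lyy * fnorm (y1 - y2))].

Definition frechet_subgrad (h : VY -> R) (Ydom : set VY) (y v : VY) : Prop :=
  Ydom y /\ forall eps, 0 < eps -> exists2 delta, 0 < delta &
    forall y', Ydom y' -> fnorm (y' - y) < delta ->
      h y + mdot v (y' - y) - eps * fnorm (y' - y) <= h y'.

(* (A3): max_w f_r(x,w) - f_r(x,y) <= 1/(2mu) dist^2(0, -grad_y f(x,y) + dh(y));
   stated for every w in dom h and every v in dh(y) (sup/inf unfolded). *)
Definition assumption_A3 (f : MX -> VY -> R) (fy : MX -> VY -> VY)
  (h : VY -> R) (Ydom : set VY) (C mu : R) : Prop :=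
  0 < mu /\
  forall x y w v, Xbar C x -> Ydom y -> Ydom w -> frechet_subgrad h Ydom y v ->
    (f x w - h w) - (f x y - h y) <= 1 / (2 * mu) * fsq (- fy x y + v).

Definition ftilde (f : MX -> VY -> R) (rho : R) (x : MX) (y : VY) : R :=
  f (Amap x) y + rho / 4 * fsq (cmap x).

Definition fhat (f : MX -> VY -> R) (rho p : R) (x : MX) (y : VY) (z : MX) : R :=
  ftilde f rho x y + p / 2 * fsq (x - z).

Definition Phi (f : MX -> VY -> R) (h : VY -> R) (Ydom : set VY) (rho p : R)
  (x z : MX) : R :=
  sup [set fhat f rho p x y z - h y | y in Ydom].

Definition is_argmin {T : Type} (S : set T) (g : T -> R) (a : T) : Prop :=
  S a /\ forall b, S b -> g a <= g b.

Definition is_prox (h : VY -> R) (Ydom : set VY) (tau : R) (v yp : VY) : Prop :=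
  is_argmin Ydom (fun y => tau * h y + 1 / 2 * fsq (y - v)) yp.

End Defs.

(* Main.v *)
Require Import Defs.
From HB Require Import structures.
From mathcomp Require Import all_boot all_order all_algebra.
From mathcomp Require Import classical_sets reals.
From mathcomp Require Import ring lra.
Import Order.TTheory GRing.Theory Num.Theory.
Local Open Scope ring_scope.
Local Open Scope classical_set_scope.

Section Norms.
Context {R : realType}.
Context {m n : nat}.
Implicit Types A B C : 'M[R]_(m, n).

Lemma mdotDl A B C : mdot (A + B) C = mdot A C + mdot B C.
Proof.
rewrite /mdot -big_split; apply: eq_bigr => i _; rewrite -big_split.
by apply: eq_bigr => j _; rewrite mxE mulrDl.
Qed.

Lemma mdotZl a A B : mdot (a *: A) B = a * mdot A B.
Proof.
rewrite /mdot mulr_sumr; apply: eq_bigr => i _; rewrite mulr_sumr.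
by apply: eq_bigr => j _; rewrite mxE mulrA.
Qed.

Lemma mdotC A B : mdot A B = mdot B A.
Proof. by rewrite /mdot; apply: eq_bigr => i _; apply: eq_bigr => j _; rewrite mulrC. Qed.

Lemma mdotNl A B : mdot (- A) B = - mdot A B.
Proof. by rewrite -scaleN1r mdotZl mulN1r. Qed.

Lemma mdotDr A B C : mdot C (A + B) = mdot C A + mdot C B.
Proof. by rewrite mdotC mdotDl !(mdotC C). Qed.
Lemma mdotZr a A B : mdot B (a *: A) = a * mdot B A.
Proof. by rewrite mdotC mdotZl mdotC. Qed.
Lemma mdotNr A B : mdot B (- A) = - mdot B A.
Proof. by rewrite mdotC mdotNl mdotC. Qed.
Lemma mdotBl A B C : mdot (A - B) C = mdot A C - mdot B C.
Proof. by rewrite mdotDl mdotNl. Qed.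
Lemma mdotBr A B C : mdot C (A - B) = mdot C A - mdot C B.
Proof. by rewrite mdotDr mdotNr. Qed.
Lemma mdot0l A : mdot 0 A = 0.
Proof. by rewrite -(scale0r (0 : 'M[R]_(m,n))) mdotZl mul0r. Qed.
Lemma mdot0r A : mdot A 0 = 0.
Proof. by rewrite mdotC mdot0l. Qed.

Lemma fsq_ge0 A : 0 <= fsq A.
Proof.
by rewrite /fsq /mdot; apply: sumr_ge0 => i _; apply: sumr_ge0 => j _; rewrite -expr2 sqr_ge0.
Qed.

Lemma fsq_eq0 A : fsq A = 0 -> A = 0.
Proof.
move=> H; apply/matrixP => i j; rewrite mxE.
have H1 : forall i, \sum_(j < n) A i j * A i j = 0.
  move=> i'; move/eqP: H; rewrite /fsq /mdot psumr_eq0.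
    by move/allP => /(_ i' (mem_index_enum _)) /= /eqP.
  by move=> k _; apply: sumr_ge0 => j' _; rewrite -expr2 sqr_ge0.
move/eqP: (H1 i); rewrite psumr_eq0; last by move=> k _; rewrite -expr2 sqr_ge0.
move/allP => /(_ j (mem_index_enum _)) /=.
by rewrite mulf_eq0 orbb => /eqP.
Qed.

Lemma fnorm_ge0 A : 0 <= fnorm A.
Proof. exact: sqrtr_ge0. Qed.

Lemma fnorm_sq A : fnorm A ^+ 2 = fsq A.
Proof. by rewrite sqr_sqrtr // fsq_ge0. Qed.

Lemma fsq_sqrt A : fsq A = fnorm A * fnorm A.
Proof. by rewrite -expr2 fnorm_sq. Qed.

Lemma fsqZ a A : fsq (a *: A) = a ^+ 2 * fsq A.
Proof. by rewrite /fsq mdotZl mdotZr mulrA expr2. Qed.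

Lemma fnormZ a A : fnorm (a *: A) = `|a| * fnorm A.
Proof. by rewrite /fnorm fsqZ sqrtrM ?sqr_ge0 // sqrtr_sqr. Qed.

Lemma fsqN A : fsq (- A) = fsq A.
Proof. by rewrite /fsq mdotNl mdotNr opprK. Qed.

Lemma fnormN A : fnorm (- A) = fnorm A.
Proof. by rewrite /fnorm fsqN. Qed.

Lemma fnormB A B : fnorm (A - B) = fnorm (B - A).
Proof. by rewrite -fnormN opprB. Qed.

Lemma fsqB A B : fsq (A - B) = fsq (B - A).
Proof. by rewrite -fsqN opprB. Qed.

Lemma fsqD A B : fsq (A + B) = fsq A + 2 * mdot A B + fsq B.
Proof. rewrite /fsq mdotDl !mdotDr (mdotC B A); ring. Qed.

Lemma fnorm0 : fnorm (0 : 'M[R]_(m,n)) = 0.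
Proof. by rewrite /fnorm /fsq mdot0l sqrtr0. Qed.

Lemma CS A B : mdot A B <= fnorm A * fnorm B.
Proof.
set a := fnorm A; set b := fnorm B.
have ha : 0 <= a by exact: fnorm_ge0.
have hb : 0 <= b by exact: fnorm_ge0.
have [a0|apos] := eqVneq a 0.
  have : fsq A = 0 by rewrite -fnorm_sq -/a a0 expr0n.
  by move/fsq_eq0 => ->; rewrite mdot0l -/a a0 mul0r.
have [b0|bpos] := eqVneq b 0.
  have : fsq B = 0 by rewrite -fnorm_sq -/b b0 expr0n.
  by move/fsq_eq0 => ->; rewrite mdot0r -/b b0 mulr0.
have H := fsq_ge0 (b *: A - a *: B).
rewrite fsqD fsqN fsqZ fsqZ mdotNr mdotZl mdotZr -!fnorm_sq -/a -/b in H.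
have hab : 0 < a * b by rewrite mulr_gt0 // lt_def ?apos ?bpos.
have : 0 <= (a * b) * (2 * (a * b - mdot A B)).
  move: H; set u := mdot A B => H.
  suff -> : a * b * (2 * (a * b - u)) = b ^+ 2 * a ^+ 2 + 2 * - (b * (a * u)) + a ^+ 2 * b ^+ 2 by [].
  ring.
rewrite pmulr_rge0 //; lra.
Qed.

Lemma CSabs A B : `|mdot A B| <= fnorm A * fnorm B.
Proof.
rewrite ler_norml CS andbT.
have := CS (- A) B; rewrite mdotNl fnormN; lra.
Qed.

Lemma fnorm_triangle A B : fnorm (A + B) <= fnorm A + fnorm B.
Proof.
have h1 := fnorm_ge0 A; have h2 := fnorm_ge0 B.
have h3 := CS A B.
have h4 : fsq (A + B) <= (fnorm A + fnorm B) ^+ 2.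
  rewrite fsqD (fsq_sqrt A) (fsq_sqrt B); nra.
rewrite -(ger0_norm (addr_ge0 h1 h2)) -sqrtr_sqr {1}/fnorm ler_sqrt ?sqr_ge0 //.
Qed.

End Norms.

Section OneD.
Context {R : realType}.

Definition hasder (phi : R -> R) (t D : R) := forall e, 0 < e -> exists2 d, 0 < d &
  forall s, 0 <= s <= 1 -> `|s - t| < d -> `|phi s - phi t - D * (s - t)| <= e * `|s - t|.

Lemma hasder_vi phi D : hasder phi 0 D -> (forall t, 0 <= t <= 1 -> phi 0 <= phi t) -> 0 <= D.
Proof.
move=> hd hmin; rewrite leNgt; apply/negP => hD.
have he : 0 < - D / 2 by lra.
have [d d0 hd'] := hd _ he.
set t := Num.min 1 (d / 2).
have t0 : 0 < t by rewrite lt_min; apply/andP; split; lra.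
have t1 : t <= 1 by rewrite ge_min lexx.
have t2 : t <= d / 2 by rewrite ge_min lexx orbT.
have ht : 0 <= t <= 1 by apply/andP; split; lra.
have := hd' t ht; rewrite subr0 (gtr0_norm t0) => /(_ ltac:(lra)).
rewrite ler_norml => /andP [_ h2].
have := hmin t ht.
have : D * t < 0 by rewrite pmulr_llt0.
nra.
Qed.

Lemma hasder_mono phi (D : R -> R) :
  (forall t, 0 <= t <= 1 -> hasder phi t (D t) /\ 0 <= D t) -> phi 0 <= phi 1.
Proof.
move=> hd.
suff H : forall e, 0 < e -> phi 0 - e <= phi 1.
  rewrite leNgt; apply/negP => hlt.
  have := H ((phi 0 - phi 1) / 2) ltac:(lra); lra.
move=> e e0.
pose S := [set t : R | (0 <= t <= 1) /\ phi 0 - e * t <= phi t].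
have S0 : S 0 by split; [rewrite lexx ler01 | rewrite mulr0 subr0].
have ub1 : ubound S 1 by move=> x [/andP [_ ->]].
have hs : has_sup S by split; [exists 0 | exists 1].
set s := sup S.
have s0 : 0 <= s by exact: (sup_upper_bound hs S0).
have s1 : s <= 1 by apply: ge_sup => //; exists 0.
have hs01 : 0 <= s <= 1 by apply/andP.
have [[d d0 hd'] Ds] : (exists2 d, 0 < d & forall x, 0 <= x <= 1 -> `|x - s| < d ->
   `|phi x - phi s - D s * (x - s)| <= e * `|x - s|) /\ 0 <= D s.
  by have [h1 h2] := hd s hs01; split => //; apply: h1.
have Ss : S s.
  have [t St hst] := sup_adherent d0 hs.
  have ts : t <= s by exact: (sup_upper_bound hs).
  case: St => /andP [t0 t1] ht.
  rewrite -/s in hst.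
  have tt01 : 0 <= t <= 1 by apply/andP.
  have tsd : `|t - s| < d by rewrite ler0_norm; lra.
  have := hd' t tt01 tsd.
  rewrite (ler0_norm (x := t - s)) ?subr_le0 // ler_norml => /andP [_ h1].
  split => //.
  have : 0 <= D s * (s - t) by apply: mulr_ge0; lra.
  lra.
have s_eq1 : s = 1.
  apply/eqP; rewrite eq_le s1 /= leNgt; apply/negP => slt.
  set q := Num.min (1 - s) (d / 2).
  have q0 : 0 < q by rewrite lt_min; apply/andP; split; lra.
  have q1 : q <= 1 - s by rewrite ge_min lexx.
  have q2 : q <= d / 2 by rewrite ge_min lexx orbT.
  have Ssq : S (s + q).
    case: Ss => _ hSs.
    have sq01 : 0 <= s + q <= 1 by apply/andP; split; lra.
    have sqd : `|s + q - s| < d by rewrite (_ : s + q - s = q); [rewrite gtr0_norm //; lra | ring].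
    have := hd' (s + q) sq01 sqd.
    rewrite (_ : s + q - s = q); last by ring.
    rewrite (gtr0_norm q0) ler_norml => /andP [h1 _].
    split; first by apply/andP; split; lra.
    have : 0 <= D s * q by apply: mulr_ge0; lra.
    lra.
  have := sup_upper_bound hs Ssq; rewrite -/s; lra.
by case: Ss; rewrite s_eq1 mulr1.
Qed.

Lemma hasder_quad phi t D K : hasder phi t D ->
  hasder (fun s => phi s - K / 2 * s ^+ 2) t (D - K * t).
Proof.
move=> hd e e0.
have [d d0 hd'] := hd (e / 2) ltac:(lra).
have hK : 0 < `|K| + 1 by have := normr_ge0 K; lra.
exists (Num.min d (e / (2 * (`|K| + 1)))).
  rewrite lt_min d0 /=; apply: divr_gt0 => //; lra.
move=> s hs; rewrite lt_min => /andP [h1 h2].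
have := hd' s hs h1.
have -> : phi s - K / 2 * s ^+ 2 - (phi t - K / 2 * t ^+ 2) - (D - K * t) * (s - t)
   = (phi s - phi t - D * (s - t)) - K / 2 * (s - t) ^+ 2 by field.
move=> hA.
apply: le_trans (ler_normB _ _) _.
have hB : `|K / 2 * (s - t) ^+ 2| <= e / 2 * `|s - t|.
  rewrite normrM normrX real_normK ?num_real // normrM.
  have hst := normr_ge0 (s - t).
  have : `|s - t| * (2 * (`|K| + 1)) <= e.
    by move: h2; rewrite ltr_pdivlMr; [move/ltW | lra].
  rewrite (@ger0_norm _ (2^-1)) ?invr_ge0 ?ler0n //.
  have hK0 := normr_ge0 K.
  move=> h3.
  rewrite -real_normK ?num_real //.
  have : `|K| * `|s - t| <= e / 2 by nra.
  move=> h4.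
  have -> : `|K| * 2^-1 * `|s - t| ^+ 2 = (`|K| * `|s - t|) * `|s - t| / 2 by rewrite expr2; field.
  nra.
lra.
Qed.
End OneD.

Section Seg.
Context {R : realType} {d1 r d2 : nat}.
Notation MX := 'M[R]_(d1, r).
Notation VY := 'rV[R]_d2.

Lemma ball_convex {C : R} (x0 x1 : MX) t : Xball C x0 -> Xball C x1 -> 0 <= t <= 1 ->
  Xball C (x0 + t *: (x1 - x0)).
Proof.
rewrite /Xball /= => h0 h1 /andP [t0 t1].
have -> : x0 + t *: (x1 - x0) = (1 - t) *: x0 + t *: x1.
  by rewrite scalerBr scalerBl scale1r addrA addrAC.
apply: le_trans (fnorm_triangle _ _) _.
rewrite !fnormZ (ger0_norm t0) ger0_norm ?subr_ge0 //.
have := fnorm_ge0 x0; have := fnorm_ge0 x1; nra.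
Qed.

Lemma seg_der {f : MX -> VY -> R} {rho p : R} {z : MX} {C : R} {Ydom : set VY}
  {Gx : MX -> VY -> MX} {Gy : MX -> VY -> VY} :
  (forall x y, Xball C x -> Ydom y -> is_grad2 (ftilde f rho) x y (Gx x y) (Gy x y)) ->
  0 < p ->
  forall x0 x1 y t, Xball C x0 -> Xball C x1 -> Ydom y -> 0 <= t <= 1 ->
  hasder (fun s => fhat f rho p (x0 + s *: (x1 - x0)) y z) t
    (mdot (Gx (x0 + t *: (x1 - x0)) y + p *: (x0 + t *: (x1 - x0) - z)) (x1 - x0)).
Proof.
move=> HG p0 x0 x1 y t hx0 hx1 hy ht e e0.
set dd := x1 - x0; set xt := x0 + t *: dd.
set nd := fnorm dd.
have nd0 : 0 <= nd := fnorm_ge0 dd.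
have S0 : 0 <= fsq dd := fsq_ge0 dd.
have hxt : Xball C xt by exact: ball_convex.
have eps0 : 0 < e / (2 * (nd + 1)) by apply: divr_gt0 => //; lra.
have [delta delta0 hd] := HG xt y hxt hy _ eps0.
have hpS : 0 < p * fsq dd + 1 by have := mulr_ge0 (ltW p0) S0; lra.
exists (Num.min (delta / (nd + 1)) (e / (p * fsq dd + 1))).
  rewrite lt_min; apply/andP; split; apply: divr_gt0 => //; lra.
move=> s hs; rewrite lt_min => /andP [h1 h2].
set u := `|s - t|.
have u0 : 0 <= u := normr_ge0 _.
have h1' : u * (nd + 1) < delta by rewrite -ltr_pdivlMr //; lra.
have h2' : u * (p * fsq dd + 1) < e by rewrite -ltr_pdivlMr.
set hx := (s - t) *: dd.
have Nhx : fnorm hx = u * nd by rewrite fnormZ.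
have hA := hd hx 0 ltac:(rewrite Nhx; nra) ltac:(rewrite fnorm0 //).
have exs : xt + hx = x0 + s *: dd.
  by rewrite /xt /hx -addrA -scalerDl; congr (_ + _ *: _); ring.
rewrite exs addr0 mdot0r subr0 fnorm0 addr0 Nhx in hA.
rewrite /fhat /= -/dd -/xt.
set a := ftilde f rho (x0 + s *: dd) y.
set b := ftilde f rho xt y.
have eqq : x0 + s *: dd - z = (xt - z) + hx by rewrite -exs addrAC.
rewrite eqq fsqD.
rewrite (mdotDl (Gx xt y)) mdotZl /hx mdotZr fsqZ.
rewrite mdotZr in hA.
set A1 := mdot (Gx xt y) dd.
set A2 := mdot (xt - z) dd.
set Q := fsq (xt - z).
set S := fsq dd.
have -> : a + p / 2 * (Q + 2 * ((s - t) * A2) + (s - t) ^+ 2 * S) - (b + p / 2 * Q)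
   - (A1 + p * A2) * (s - t) = (a - b - (s - t) * A1) + p / 2 * ((s - t) ^+ 2 * S).
  by field.
apply: le_trans (ler_normD _ _) _.
have hB : `|p / 2 * ((s - t) ^+ 2 * S)| <= e / 2 * u.
  rewrite ger0_norm; last by apply: mulr_ge0; [apply: divr_ge0; lra | apply: mulr_ge0; [apply: sqr_ge0|]].
  rewrite -real_normK ?num_real // -/u.
  have : u * (p * S) <= e by rewrite -/S in h2'; nra.
  move=> h3.
  have -> : p / 2 * (u ^+ 2 * S) = (u * (p * S)) * u / 2 by rewrite expr2; field.
  nra.
have hC : e / (2 * (nd + 1)) * (u * nd) <= e / 2 * u.
  have -> : e / (2 * (nd + 1)) * (u * nd) = (e / 2 * u) * (nd / (nd + 1)) by field; lra.
  apply: ler_piMr; first by apply: mulr_ge0 => //; lra.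
  by rewrite ler_pdivrMr ?mul1r; lra.
lra.
Qed.


Lemma vi_min {f : MX -> VY -> R} {rho p : R} {z : MX} {C : R} {Ydom : set VY}
  {Gx : MX -> VY -> MX} {Gy : MX -> VY -> VY} :
  (forall x y, Xball C x -> Ydom y -> is_grad2 (ftilde f rho) x y (Gx x y) (Gy x y)) ->
  0 < p -> forall x0 x1 y, Ydom y ->
  is_argmin (Xball C) (fun x => fhat f rho p x y z) x0 -> Xball C x1 ->
  0 <= mdot (Gx x0 y + p *: (x0 - z)) (x1 - x0).
Proof.
move=> HG p0 x0 x1 y hy [hx0 hmin] hx1.
have h01 : 0 <= (0:R) <= 1 by rewrite lexx ler01.
have := seg_der (z:=z) HG p0 _ _ _ _ hx0 hx1 hy h01.
rewrite scale0r addr0 => hd.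
apply: (hasder_vi _ _ hd) => t ht.
rewrite scale0r addr0.
by apply: hmin; apply: ball_convex.
Qed.

Lemma growth_min {f : MX -> VY -> R} {rho p : R} {z : MX} {C : R} {Ydom : set VY}
  {Gx : MX -> VY -> MX} {Gy : MX -> VY -> VY} l :
  (forall x y, Xball C x -> Ydom y -> is_grad2 (ftilde f rho) x y (Gx x y) (Gy x y)) ->
  0 <= l -> l < p ->
  (forall x1 y1 x2 y2, Xball C x1 -> Ydom y1 -> Xball C x2 -> Ydom y2 ->
     fnorm (Gx x1 y1 - Gx x2 y2) <= l * fnorm (x1 - x2) + l * fnorm (y1 - y2)) ->
  forall x0 x1 y, Ydom y ->
  is_argmin (Xball C) (fun x => fhat f rho p x y z) x0 -> Xball C x1 ->
  fhat f rho p x0 y z + (p - l) / 2 * fsq (x1 - x0) <= fhat f rho p x1 y z.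
Proof.
move=> HG l0 lp HL x0 x1 y hy hmin0 hx1.
have p0 : 0 < p by lra.
have hx0 := hmin0.1.
have hvi := vi_min HG p0 _ _ _ hy hmin0 hx1.
set dd := x1 - x0.
set K := (p - l) * fsq dd.
pose phi := fun s => fhat f rho p (x0 + s *: dd) y z.
pose D := fun t => mdot (Gx (x0 + t *: dd) y + p *: (x0 + t *: dd - z)) dd.
have := @hasder_mono _ (fun s => phi s - K / 2 * s ^+ 2) (fun t => D t - K * t).
move=> H.
have e0 : phi 0 = fhat f rho p x0 y z by rewrite /phi scale0r addr0.
have e1 : phi 1 = fhat f rho p x1 y z by rewrite /phi scale1r /dd addrC subrK.
suff : phi 0 - K / 2 * 0 ^+ 2 <= phi 1 - K / 2 * 1 ^+ 2.
  by rewrite e0 e1 expr0n /= mulr0 subr0 expr1n mulr1 /K; lra.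
apply: H => t ht.
split; first by apply: hasder_quad; rewrite /phi /D; exact: (seg_der HG p0 _ _ _ _ hx0 hx1 hy ht).
rewrite -/dd /D.
case/andP: ht => t0 t1.
have ee1 : x0 + t *: dd - z = (x0 - z) + t *: dd by rewrite addrAC.
rewrite ee1 (mdotDl (Gx _ _)) mdotZl (mdotDl (x0 - z)) mdotZl.
have hxt : Xball C (x0 + t *: dd) by apply: ball_convex => //; apply/andP.
have hL := HL _ _ _ _ hxt hy hx0 hy.
have ex : x0 + t *: dd - x0 = t *: dd by rewrite addrC addKr.
rewrite subrr fnorm0 mulr0 addr0 ex fnormZ (ger0_norm t0) in hL.
have hcs := CS (Gx (x0 + t *: dd) y - Gx x0 y) dd.
rewrite mdotBl in hcs.
have hvi' : 0 <= mdot (Gx x0 y) dd + p * mdot (x0 - z) dd.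
  by move: hvi; rewrite mdotDl mdotZl.
have nd0 := fnorm_ge0 dd.
have hq : fnorm (Gx (x0 + t *: dd) y - Gx x0 y) * fnorm dd <= l * (t * fnorm dd) * fnorm dd.
  by nra.
rewrite /K (fsq_sqrt dd).
have : mdot (Gx x0 y) dd - mdot (Gx (x0 + t *: dd) y) dd <= l * t * (fnorm dd * fnorm dd).
  have := CS (Gx x0 y - Gx (x0 + t *: dd) y) dd.
  rewrite mdotBl => h; apply: le_trans h _.
  rewrite fnormB; move: hq; rewrite -!mulrA //.
rewrite -/(fsq dd) (fsq_sqrt dd); nra.
Qed.
End Seg.

Section Misc.
Context {R : realType} {d1 r d2 : nat}.
Notation MX := 'M[R]_(d1, r).
Notation VY := 'rV[R]_d2.

Lemma prox_subgrad (h : VY -> R) Ydom tau v0 yp : is_prox h Ydom tau v0 yp -> 0 < tau ->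
  frechet_subgrad h Ydom yp (tau^-1 *: (v0 - yp)).
Proof.
move=> [hyp hmin] tau0; split => // e e0.
exists (2 * tau * e); first by rewrite !mulr_gt0.
move=> y' hy' hN.
have := hmin y' hy'.
have -> : y' - v0 = (y' - yp) + (yp - v0) by rewrite addrA subrK.
rewrite (fsqD (y' - yp)) -(opprB yp v0) mdotZl mdotNl (mdotC (y' - yp)).
set M := mdot (yp - v0) (y' - yp).
set N := fnorm (y' - yp).
rewrite (fsq_sqrt (y' - yp)) -/N => H.
have N0 : 0 <= N := fnorm_ge0 _.
have hNN : N * N <= N * (2 * tau * e) by apply: ler_wpM2l => //; exact: ltW.
rewrite -(ler_pM2l tau0).
have -> : tau * (h yp + tau^-1 * - M - e * N) = tau * h yp - M - tau * e * N.
  by field; lra.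
nra.
Qed.

Lemma grad_ident (f : MX -> VY -> R) fx fy (U : set (MX * VY)) Ydom C rho Gx Gy x y :
  (forall x y, Xbar C x -> Ydom y -> U (x, y)) ->
  (forall x y, U (x, y) -> is_grad2 f x y (fx x y) (fy x y)) ->
  (forall x y, Xball C x -> Ydom y -> is_grad2 (ftilde f rho) x y (Gx x y) (Gy x y)) ->
  Xball C x -> Ydom y -> Gy x y = fy (Amap x) y.
Proof.
move=> hU hGf HG hx hy.
set D := Gy x y - fy (Amap x) y.
suff : fsq D = 0 by move/fsq_eq0/eqP; rewrite subr_eq0 => /eqP.
apply/eqP; apply: contraT => hD.
set N := fnorm D.
have N0 : 0 < N by rewrite /N /fnorm sqrtr_gt0 lt_def hD fsq_ge0.
have e0 : 0 < N / 4 by lra.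
have hxb : Xbar C (Amap x) by exists x.
have [dl1 dl10 h1] := HG x y hx hy _ e0.
have [dl2 dl20 h2] := hGf _ _ (hU _ _ hxb hy) _ e0.
set delta := Num.min dl1 dl2.
have delta0 : 0 < delta by rewrite lt_min dl10 dl20.
set s := delta / (2 * N).
have s0 : 0 < s by apply: divr_gt0 => //; lra.
set hy' := s *: D.
have Nh : fnorm hy' = delta / 2.
  by rewrite fnormZ gtr0_norm // /s -/N; field; lra.
have hd1 : delta <= dl1 by rewrite ge_min lexx.
have hd2 : delta <= dl2 by rewrite ge_min lexx orbT.
have := h1 0 hy' ltac:(rewrite fnorm0 //) ltac:(rewrite Nh; lra).
have := h2 0 hy' ltac:(rewrite fnorm0 //) ltac:(rewrite Nh; lra).
rewrite !addr0 !mdot0r !subr0 !fnorm0 !add0r Nh /ftilde.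
set F1 := f (Amap x) (y + hy'); set F0 := f (Amap x) y.
have -> : F1 + rho / 4 * fsq (cmap x) - (F0 + rho / 4 * fsq (cmap x)) = F1 - F0 by ring.
rewrite !ler_norml => /andP [a1 a2] /andP [b1 b2].
have hdot : mdot (Gy x y) hy' - mdot (fy (Amap x) y) hy' = s * (N * N).
  by rewrite -mdotBl -/D /hy' mdotZr -fsq_sqrt.
have : s * (N * N) <= N / 4 * (delta / 2) * 2 by lra.
have -> : N / 4 * (delta / 2) * 2 = s * (N * N) / 2 by rewrite /s; field; lra.
have : 0 < s * (N * N) by apply: mulr_gt0 => //; apply: mulr_gt0.
lra.
Qed.
End Misc.

Theorem lemma9 (R : realType) (d1 r d2 : nat)
  (f : 'M[R]_(d1, r) -> 'rV[R]_d2 -> R)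
  (fx : 'M[R]_(d1, r) -> 'rV[R]_d2 -> 'M[R]_(d1, r))
  (fy : 'M[R]_(d1, r) -> 'rV[R]_d2 -> 'rV[R]_d2)
  (U : set ('M[R]_(d1, r) * 'rV[R]_d2))
  (h : 'rV[R]_d2 -> R) (Ydom : set 'rV[R]_d2)
  (zeta Lxx Lxy Lyx Lyy mu C rho l p tau2 : R)
  (Gx : 'M[R]_(d1, r) -> 'rV[R]_d2 -> 'M[R]_(d1, r))
  (Gy : 'M[R]_(d1, r) -> 'rV[R]_d2 -> 'rV[R]_d2)
  (yt : 'rV[R]_d2) (zt : 'M[R]_(d1, r))
  (xa : 'M[R]_(d1, r)) (yplus : 'rV[R]_d2) (xs1 xs2 : 'M[R]_(d1, r)) :
  assumption_A1 h Ydom zeta ->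
  assumption_A2 f fx fy U Ydom C Lxx Lxy Lyx Lyy ->
  assumption_A3 f fy h Ydom C mu ->
  (forall x : 'M[R]_(d1, r), stiefel x -> 1 / 2 + fnorm x < C) ->
  0 < rho ->
  (* (Gx, Gy) is the gradient of tilde f on X x Y *)
  (forall x y, Xball C x -> Ydom y -> is_grad2 (ftilde f rho) x y (Gx x y) (Gy x y)) ->
  (* l is a (blockwise) Lipschitz constant of grad tilde f on X x Y *)
  0 <= l ->
  (forall x1 y1 x2 y2, Xball C x1 -> Ydom y1 -> Xball C x2 -> Ydom y2 ->
     fnorm (Gx x1 y1 - Gx x2 y2) <= l * fnorm (x1 - x2) + l * fnorm (y1 - y2)) ->
  (forall x1 y1 x2 y2, Xball C x1 -> Ydom y1 -> Xball C x2 -> Ydom y2 ->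
     fnorm (Gy x1 y1 - Gy x2 y2) <= l * fnorm (x1 - x2) + l * fnorm (y1 - y2)) ->
  l < p ->
  0 < tau2 -> tau2 * zeta < 1 ->
  Ydom yt ->
  (* xa = x*(y_t, z_t) *)
  is_argmin (Xball C) (fun x => fhat f rho p x yt zt) xa ->
  (* yplus = y^+(z_t) = prox_{tau2 h}(y_t + tau2 grad_y tilde f(x*(y_t,z_t), y_t)) *)
  is_prox h Ydom tau2 (yt + tau2 *: Gy xa yt) yplus ->
  (* xs1 = x*(y^+(z_t), z_t) *)
  is_argmin (Xball C) (fun x => fhat f rho p x yplus zt) xs1 ->
  (* xs2 = x*(z_t) *)
  is_argmin (Xball C) (fun x => Phi f h Ydom rho p x zt) xs2 ->
  let gamma2 := (p + l) / (p - l) in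
  fsq (xs1 - xs2) <=
    3 / (mu * (p - l) * tau2 ^+ 2)
      * (1 + tau2 ^+ 2 * l ^+ 2 + gamma2 ^+ 2 * tau2 ^+ 2 * l ^+ 2)
      * fsq (yplus - yt).
Proof.
move=> _ [_ hU hGf _ _] [mu0 HA3] _ rho0 HG l0 HLx HLy lp tau0 _ hyt hxa hprox hxs1 hxs2.
cbv zeta.
set gamma2 := (p + l) / (p - l).
have p0 : 0 < p by lra.
have pl0 : 0 < p - l by lra.
have hyp : Ydom yplus := hprox.1.
set vsub := tau2^-1 *: (yt + tau2 *: Gy xa yt - yplus).
have hsub : frechet_subgrad h Ydom yplus vsub by exact: prox_subgrad.
have Gid : Gy xs1 yplus = fy (Amap xs1) yplus.
  exact: (@grad_ident _ _ _ _ f fx fy U Ydom C rho Gx Gy xs1 yplus hU hGf HG hxs1.1 hyp).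
have Eub : forall x, Xball C x -> forall w, Ydom w ->
   fhat f rho p x w zt - h w <= fhat f rho p x yplus zt - h yplus
     + 1 / (2 * mu) * fsq (- fy (Amap x) yplus + vsub).
  move=> x hx w hw.
  have hxb : Xbar C (Amap x) by exists x.
  have := HA3 _ _ _ _ hxb hyp hw hsub.
  rewrite /fhat /ftilde; lra.
have Phi1 : Phi f h Ydom rho p xs1 zt <= fhat f rho p xs1 yplus zt - h yplus
     + 1 / (2 * mu) * fsq (- fy (Amap xs1) yplus + vsub).
  apply: ge_sup; first by exists (fhat f rho p xs1 yplus zt - h yplus); exists yplus.
  by move=> _ [w hw <-]; apply: Eub => //; exact: hxs1.1.
have Phi2 : fhat f rho p xs2 yplus zt - h yplus <= Phi f h Ydom rho p xs2 zt.
  apply: sup_upper_bound; last by exists yplus.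
  split; first by exists (fhat f rho p xs2 yplus zt - h yplus); exists yplus.
  exists (fhat f rho p xs2 yplus zt - h yplus
     + 1 / (2 * mu) * fsq (- fy (Amap xs2) yplus + vsub)).
  by move=> _ [w hw <-]; apply: Eub => //; exact: hxs2.1.
have Phi12 : Phi f h Ydom rho p xs2 zt <= Phi f h Ydom rho p xs1 zt.
  exact: hxs2.2 _ hxs1.1.
have hgr := growth_min l HG l0 lp HLx _ _ _ hyp hxs1 hxs2.1.
rewrite -Gid in Phi1.
set w := - Gy xs1 yplus + vsub.
have Sxs : fsq (xs2 - xs1) <= fsq w / (mu * (p - l)).
  rewrite ler_pdivlMr; last by apply: mulr_gt0.
  have : (p - l) / 2 * fsq (xs2 - xs1) <= 1 / (2 * mu) * fsq w by lra.
  have -> : 1 / (2 * mu) * fsq w = fsq w / mu / 2 by field; lra.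
  move=> H.
  have : (p - l) * fsq (xs2 - xs1) <= fsq w / mu by lra.
  rewrite -(ler_pM2r mu0) mulfVK; last by lra.
  by have -> : fsq (xs2 - xs1) * (mu * (p - l)) = (p - l) * fsq (xs2 - xs1) * mu by ring.
set ee := xs1 - xa.
have vi1 := vi_min HG p0 _ _ _ hyt hxa hxs1.1.
have vi2 := vi_min HG p0 _ _ _ hyp hxs1 hxa.1.
rewrite -/ee in vi1.
rewrite (_ : xa - xs1 = - ee) in vi2; last by rewrite opprB.
rewrite mdotNr !mdotDl !mdotZl in vi1 vi2.
have hfe : fsq ee = mdot xs1 ee - mdot xa ee by rewrite /fsq mdotBl.
rewrite !mdotBl in vi1 vi2.
have hGa := CS (Gx xa yt - Gx xs1 yplus) ee.
rewrite mdotBl in hGa.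
have hLa := HLx _ _ _ _ hxa.1 hyt hxs1.1 hyp.
set n := fnorm (yplus - yt).
have n0 : 0 <= n := fnorm_ge0 _.
rewrite (fnormB yt) -/n (fnormB xa) -/ee in hLa.
set ne := fnorm ee.
have ne0 : 0 <= ne := fnorm_ge0 _.
have hq : fnorm (Gx xa yt - Gx xs1 yplus) * ne <= (l * ne + l * n) * ne.
  by apply: ler_wpM2r.
rewrite (fsq_sqrt ee) -/ne in hfe.
have hGa' : mdot (Gx xa yt) ee - mdot (Gx xs1 yplus) ee <=
    fnorm (Gx xa yt - Gx xs1 yplus) * ne := hGa.
have hp : p * (ne * ne) = p * (mdot xs1 ee - mdot xa ee) by rewrite hfe.
have hne : (p - l) * (ne * ne) <= l * n * ne by lra.
have hne2 : ne <= l * n / (p - l).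
  rewrite ler_pdivlMr //.
  have [ne00|nepos] := eqVneq ne 0.
    by rewrite ne00 mul0r; apply: mulr_ge0.
  have nep : 0 < ne by rewrite lt_def nepos ne0.
  rewrite -(ler_pM2r nep); nra.
have ew : w = tau2^-1 *: (yt - yplus) + (Gy xa yt - Gy xs1 yplus).
  apply/matrixP => i j; rewrite /w /vsub !mxE; field; lra.
have hLy := HLy _ _ _ _ hxa.1 hyt hxs1.1 hyp.
rewrite (fnormB yt) -/n (fnormB xa) -/ee -/ne in hLy.
have Nw : fnorm w <= tau2^-1 * n + l * n + l * ne.
  rewrite ew; apply: le_trans (fnorm_triangle _ _) _.
  rewrite fnormZ (fnormB yt) -/n gtr0_norm ?invr_gt0 //; lra.
have hg : l / (p - l) <= gamma2.
  rewrite /gamma2 ler_pM2r ?invr_gt0 //; lra.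
have Nw2 : fnorm w <= tau2^-1 * n + l * n + l * gamma2 * n.
  apply: le_trans Nw _.
  have : l * ne <= l * (l * n / (p - l)) by apply: ler_wpM2l.
  have : l * (l * n / (p - l)) <= l * gamma2 * n.
    have -> : l * (l * n / (p - l)) = l * (l / (p - l)) * n by ring.
    by apply: ler_wpM2r => //; apply: ler_wpM2l.
  lra.
have Sw : fsq w <= 3 * (tau2^-2 + l ^+ 2 + gamma2 ^+ 2 * l ^+ 2) * fsq (yplus - yt).
  rewrite (fsq_sqrt w) (fsq_sqrt (yplus - yt)) -/n.
  have Nw0 := fnorm_ge0 w.
  set a := tau2^-1 * n; set b := l * n; set c := l * gamma2 * n.
  have hsq := ler_pM Nw0 Nw0 Nw2 Nw2.
  apply: le_trans hsq _.
  have -> : 3 * (tau2 ^- 2 + l ^+ 2 + gamma2 ^+ 2 * l ^+ 2) * (n * n)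
      = 3 * (a * a + b * b + c * c).
    by rewrite /a /b /c; field; lra.
  have h1 := sqr_ge0 (a - b); have h2 := sqr_ge0 (b - c); have h3 := sqr_ge0 (a - c).
  rewrite /a /b /c in h1 h2 h3 *; nra.
rewrite fsqB.
apply: le_trans Sxs _.
rewrite ler_pdivrMr; last by apply: mulr_gt0.
apply: le_trans Sw _.
rewrite le_eqVlt; apply/orP; left; apply/eqP.
field.
apply/and3P; split; apply/eqP; lra.
Qed.
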